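(* Let $\Bbbk$ be an algebraically closed field of characteristic zero, $G$ a finite group, $\chi:G\to\Bbbk^\times$ a linear character, $g\in Z(G)$, $n\geq 2$ the multiplicative order of $\chi(g)$, and $\alpha\in\Bbbk$ with $\alpha(g^n-1)=0$ or $\chi^n=1$. Let $H$ be the $\Bbbk$-algebra generated by $\Bbbk G$ and $z$ with relations $z^n=\alpha(g^n-1)$ and $zs=\chi(s)sz$ for $s\in G$. Then for all $h_1,h_2\in\Bbbk G$ and $0\leq m\leq n-1$, there exists $h\in Z(\Bbbk G)$ with $h^2=h$ such that $(z^mh_1,z^mh_2)=(z^mh)$.
   Context: $(a_1,\dots,a_t)$ denotes the two-sided ideal of $H$ generated by $a_1,\dots,a_t$. *)

(* Defs.v *)
From HB Require Import structures.
From mathcomp Require Import all_boot all_order all_fingroup all_algebra.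
Set Implicit Arguments. Unset Strict Implicit. Unset Printing Implicit Defensive.
Import GRing.Theory.
Local Open Scope ring_scope.

(* The algebra H of the paper is realised concretely on its normal-form basis
   { z^i s : 0 <= i < n, s in G }: an element of H is a finitely supported
   coefficient function 'I_n * G -> k, the pair (i, s) standing for z^i s
   (z to the LEFT of the group element). *)

Definition fscale (k : fieldType) (T : finType) (c : k) (f : {ffun T -> k})
  : {ffun T -> k} := [ffun x => c * f x].

Section Taft.
Variables (k : fieldType) (gT : finGroupType) (n : nat) (chi : gT -> k)
  (g : gT) (alpha : k).

Definition gdelta (u : gT) : {ffun gT -> k} := [ffun s => (s == u)%:R].

Definition kGmul (a b : {ffun gT -> k}) : {ffun gT -> k} :=
  [ffun u => \sum_(s : gT) a s * b (s^-1 * u)%g].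

Definition Hbasis (i : nat) (s : gT) : {ffun 'I_n * gT -> k} :=
  [ffun c => ((nat_of_ord c.1 == i) && (c.2 == s))%:R].

(* product of basis vectors, computed from z s = chi(s) s z and
   z^n = alpha (g^n - 1):
   (z^i s)(z^j t) = chi(s)^{-j} z^{i+j} s t, and, when i+j >= n,
   z^{i+j} = z^{i+j-n} alpha (g^n - 1). *)
Definition Hbmul (a b : 'I_n * gT) : {ffun 'I_n * gT -> k} :=
  let i := nat_of_ord a.1 in let s := a.2 in
  let j := nat_of_ord b.1 in let t := b.2 in
  if (i + j < n)%N then fscale ((chi s)^-1 ^+ j) (Hbasis (i + j) (s * t)%g)
  else fscale (alpha * (chi s)^-1 ^+ j)
         (Hbasis (i + j - n) (g ^+ n * s * t)%g - Hbasis (i + j - n) (s * t)%g).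

Definition Hmul (x y : {ffun 'I_n * gT -> k}) : {ffun 'I_n * gT -> k} :=
  \sum_(a : 'I_n * gT) \sum_(b : 'I_n * gT) fscale (x a * y b) (Hbmul a b).

Definition zpow_kG (m : nat) (h : {ffun gT -> k}) : {ffun 'I_n * gT -> k} :=
  [ffun c => if nat_of_ord c.1 == m then h c.2 else 0].

Definition is_ideal (P : {ffun 'I_n * gT -> k} -> Prop) : Prop :=
  [/\ P 0, (forall x y, P x -> P y -> P (x + y)),
      (forall c x, P x -> P (fscale c x)) &
      (forall u x, P x -> P (Hmul u x) /\ P (Hmul x u))].

Definition ideal_gen (S : seq {ffun 'I_n * gT -> k}) (x : {ffun 'I_n * gT -> k})
  : Prop :=
  forall P, is_ideal P -> (forall s, s \in S -> P s) -> P x.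

End Taft.

(* Main.v *)
Require Import Defs.
From HB Require Import structures.
From mathcomp Require Import all_boot all_order all_fingroup all_algebra.
Set Implicit Arguments. Unset Strict Implicit. Unset Printing Implicit Defensive.
Import GRing.Theory.
Local Open Scope ring_scope.

Section KG.
Variables (k : fieldType) (gT : finGroupType).
Local Notation V := {ffun gT -> k^o}.
Local Notation kGmul := (@kGmul k gT).

Definition ltr (u : gT) (a : V) : V := [ffun x => a (u^-1 * x)%g].
Definition rtr (v : gT) (a : V) : V := [ffun x => a (x * v^-1)%g].

Lemma ltr_is_linear u : linear (ltr u).
Proof. by move=> c a b; apply/ffunP=> x; rewrite !ffunE. Qed.
HB.instance Definition _ u := GRing.isLinear.Build k V V _ (ltr u) (ltr_is_linear u).
Lemma rtr_is_linear u : linear (rtr u).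
Proof. by move=> c a b; apply/ffunP=> x; rewrite !ffunE. Qed.
HB.instance Definition _ u := GRing.isLinear.Build k V V _ (rtr u) (rtr_is_linear u).

Lemma ltrZ u c a : ltr u (c *: a) = c *: ltr u a.
Proof. by apply/ffunP=> x; rewrite !ffunE. Qed.
Lemma rtrZ u c a : rtr u (c *: a) = c *: rtr u a.
Proof. by apply/ffunP=> x; rewrite !ffunE. Qed.
Lemma ltrD u a b : ltr u (a + b) = ltr u a + ltr u b.
Proof. by apply/ffunP=> x; rewrite !ffunE. Qed.
Lemma rtrD u a b : rtr u (a + b) = rtr u a + rtr u b.
Proof. by apply/ffunP=> x; rewrite !ffunE. Qed.
Lemma ltr0 u : ltr u 0 = 0.
Proof. by apply/ffunP=> x; rewrite !ffunE. Qed.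
Lemma rtr0 u : rtr u 0 = 0.
Proof. by apply/ffunP=> x; rewrite !ffunE. Qed.
Lemma ltr_sum u (I : Type) (r : seq I) (F : I -> V) :
  ltr u (\sum_(i <- r) F i) = \sum_(i <- r) ltr u (F i).
Proof. by apply/ffunP=> x; rewrite !ffunE !sum_ffunE; apply: eq_bigr => i _; rewrite ffunE. Qed.
Lemma rtr_sum u (I : Type) (r : seq I) (F : I -> V) :
  rtr u (\sum_(i <- r) F i) = \sum_(i <- r) rtr u (F i).
Proof. by apply/ffunP=> x; rewrite !ffunE !sum_ffunE; apply: eq_bigr => i _; rewrite ffunE. Qed.

Lemma ltrM u w a : ltr u (ltr w a) = ltr (u * w) a.
Proof. by apply/ffunP=> x; rewrite !ffunE invMg mulgA. Qed.
Lemma rtrM u w a : rtr u (rtr w a) = rtr (w * u) a.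
Proof. by apply/ffunP=> x; rewrite !ffunE invMg mulgA. Qed.
Lemma ltr_rtr u v a : ltr u (rtr v a) = rtr v (ltr u a).
Proof. by apply/ffunP=> x; rewrite !ffunE mulgA. Qed.
Lemma ltr1 a : ltr 1 a = a.
Proof. by apply/ffunP=> x; rewrite !ffunE invg1 mul1g. Qed.
Lemma rtr1 a : rtr 1 a = a.
Proof. by apply/ffunP=> x; rewrite !ffunE invg1 mulg1. Qed.

Lemma kGmul_dl u (a : V) : kGmul (gdelta k u) a = ltr u a.
Proof.
apply/ffunP=> x; rewrite !ffunE (bigD1 u) //= big1 => [|s /negPf nsu].
  by rewrite !ffunE eqxx mul1r addr0.
by rewrite !ffunE nsu mul0r.
Qed.

Lemma kGmul_dr v (a : V) : kGmul a (gdelta k v) = rtr v a.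
Proof.
apply/ffunP=> x; rewrite !ffunE (bigD1 (x * v^-1)%g) //= big1 => [|s nsu].
  by rewrite !ffunE invMg invgK -mulgA mulVg mulg1 eqxx mulr1 addr0.
rewrite !ffunE; case: eqP => [e|]; last by rewrite mulr0.
by case/eqP: nsu; rewrite -e invMg invgK mulKVg.
Qed.

Lemma kGmul_suml (a b : V) : kGmul a b = \sum_u a u *: ltr u b.
Proof. by apply/ffunP=> x; rewrite !ffunE sum_ffunE; apply: eq_bigr => u _; rewrite !ffunE. Qed.

Lemma kGmul_sumr (a b : V) : kGmul a b = \sum_v b v *: rtr v a.
Proof.
apply/ffunP=> x; rewrite !ffunE sum_ffunE.
rewrite (reindex_inj (h := fun v => (x * v^-1)%g)); last first.
  by move=> p q /mulgI /invg_inj.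
apply: eq_bigr => s _; rewrite !ffunE invMg invgK -mulgA mulVg mulg1.
by rewrite mulrC.
Qed.


Lemma span_ind (Q : V -> Prop) (S : seq V) :
  Q 0 -> (forall x y, Q x -> Q y -> Q (x + y)) -> (forall c x, Q x -> Q (c *: x)) ->
  (forall x, x \in S -> Q x) -> forall v, v \in <<S>>%VS -> Q v.
Proof.
move=> Q0 QD QZ QS v vS; rewrite (coord_span (X := in_tuple S) vS).
apply: (big_ind Q) => // i _; apply: QZ; apply: QS.
have := mem_tnth i (in_tuple S). rewrite (tnth_nth 0). exact.
Qed.

Variables (h1 h2 : V).
Hypothesis hN : (#|gT|%:R : k) != 0.

Definition gens : seq V :=
  [seq ltr p.1.1 (rtr p.1.2 (if p.2 then h1 else h2)) | p <- enum {: (gT * gT) * bool}].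
Definition I := <<gens>>%VS.

Lemma gens_ltr u x : x \in gens -> ltr u x \in gens.
Proof.
case/mapP=> [[[a b] c]] _ ->; rewrite /= ltrM.
by apply/mapP; exists ((u * a)%g, b, c); rewrite ?mem_enum.
Qed.
Lemma gens_rtr u x : x \in gens -> rtr u x \in gens.
Proof.
case/mapP=> [[[a b] c]] _ ->; rewrite /= -ltr_rtr rtrM.
by apply/mapP; exists (a, (b * u)%g, c); rewrite ?mem_enum.
Qed.

Lemma I_ltr u x : x \in I -> ltr u x \in I.
Proof.
apply: (@span_ind (fun x => ltr u x \in I)) => [|y z Hy Hz|c y Hy|y Hy]; rewrite ?ltr0 ?rtr0 ?ltrD ?rtrD ?ltrZ ?rtrZ ?rpred0 ?rpredD ?rpredZ //.
by apply: memv_span; apply: gens_ltr.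
Qed.
Lemma I_rtr u x : x \in I -> rtr u x \in I.
Proof.
apply: (@span_ind (fun x => rtr u x \in I)) => [|y z Hy Hz|c y Hy|y Hy]; rewrite ?ltr0 ?rtr0 ?ltrD ?rtrD ?ltrZ ?rtrZ ?rpred0 ?rpredD ?rpredZ //.
by apply: memv_span; apply: gens_rtr.
Qed.

Lemma scale_congr (c : k) (A B : V) : A = B -> c *: A = c *: B.
Proof. by move->. Qed.

Definition pi2 (x : V) : V := ((#|gT| * #|gT|)%:R)^-1 *:
  \sum_s \sum_t ltr s (rtr t (projv I (ltr s^-1 (rtr t^-1 x)))).

Lemma pi2_is_linear : linear pi2.
Proof.
move=> a x y; rewrite /pi2 [a *: (_ *: _)]scalerA mulrC -scalerA -scalerDr.
have -> : \sum_s \sum_t ltr s (rtr t (projv I (ltr s^-1 (rtr t^-1 (a *: x + y))))) = 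
  a *: (\sum_s \sum_t ltr s (rtr t (projv I (ltr s^-1 (rtr t^-1 x))))) +
  \sum_s \sum_t ltr s (rtr t (projv I (ltr s^-1 (rtr t^-1 y)))).
  rewrite scaler_sumr -big_split; apply: eq_bigr => s _.
  rewrite scaler_sumr -big_split; apply: eq_bigr => t _.
  by rewrite ?ltrD ?rtrD ?ltrZ ?rtrZ !linearD !linearZ ?ltrD ?rtrD ?ltrZ ?rtrZ.
by [].
Qed.
HB.instance Definition _ := GRing.isLinear.Build k V V _ pi2 pi2_is_linear.

Lemma pi2D a b : pi2 (a + b) = pi2 a + pi2 b.
Proof. by have := pi2_is_linear 1 a b; rewrite !scale1r. Qed.
Lemma pi20 : pi2 0 = 0.
Proof.
rewrite /pi2 big1 ?scaler0 // => s _; rewrite big1 // => t _.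
by rewrite rtr0 ltr0 linear0 rtr0 ltr0.
Qed.
Lemma pi2Z c a : pi2 (c *: a) = c *: pi2 a.
Proof. by have := pi2_is_linear c a 0; rewrite !addr0 pi20 addr0. Qed.
Lemma pi2_sum (J : Type) (r : seq J) (F : J -> V) :
  pi2 (\sum_(i <- r) F i) = \sum_(i <- r) pi2 (F i).
Proof. by elim: r => [|i r IH]; rewrite ?big_nil ?pi20 // !big_cons pi2D IH. Qed.

Lemma pi2_ltr u x : pi2 (ltr u x) = ltr u (pi2 x).
Proof.
rewrite /pi2 ltrZ ltr_sum; apply: scale_congr.
rewrite (reindex_inj (mulgI u)); apply: eq_bigr => s _.
rewrite ltr_sum; apply: eq_bigr => t _ /=.
by rewrite -ltr_rtr ltrM invMg -mulgA mulVg mulg1 ltrM.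
Qed.

Lemma pi2_rtr v x : pi2 (rtr v x) = rtr v (pi2 x).
Proof.
rewrite /pi2 rtrZ rtr_sum; apply: scale_congr; apply: eq_bigr => s _.
rewrite rtr_sum (reindex_inj (mulIg v)); apply: eq_bigr => t _ /=.
by rewrite rtrM invMg mulgA mulgV mul1g -ltr_rtr rtrM.
Qed.

Lemma pi2_kGl (a y : V) : pi2 (kGmul a y) = kGmul a (pi2 y).
Proof.
rewrite !kGmul_suml pi2_sum; apply: eq_bigr => u _.
by rewrite pi2Z pi2_ltr.
Qed.
Lemma pi2_kGr (a y : V) : pi2 (kGmul y a) = kGmul (pi2 y) a.
Proof.
rewrite !kGmul_sumr pi2_sum; apply: eq_bigr => u _.
by rewrite pi2Z pi2_rtr.
Qed.

Lemma pi2_in x : pi2 x \in I.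
Proof.
rewrite /pi2 rpredZ // rpred_sum // => s _; rewrite rpred_sum // => t _.
by apply: I_ltr; apply: I_rtr; apply: memv_proj.
Qed.

Lemma pi2_id x : x \in I -> pi2 x = x.
Proof.
move=> xI; rewrite /pi2.
have -> : \sum_s \sum_t ltr s (rtr t (projv I (ltr s^-1 (rtr t^-1 x)))) =
   \sum_(s : gT) \sum_(t : gT) x.
  apply: eq_bigr => s _; apply: eq_bigr => t _.
  rewrite projv_id; last by apply: I_ltr; apply: I_rtr.
  by rewrite -ltr_rtr ltrM mulgV ltr1 rtrM mulVg rtr1.
rewrite !sumr_const -mulrnA -scaler_nat scalerA mulVf ?scale1r //.
by rewrite natrM mulf_neq0.
Qed.

Definition eI := pi2 (gdelta k 1%g).

Lemma eI_central (x : V) : kGmul eI x = kGmul x eI.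
Proof.
by rewrite /eI -pi2_kGl -pi2_kGr kGmul_dl kGmul_dr ltr1 rtr1.
Qed.
Lemma eI_in : eI \in I.
Proof. exact: pi2_in. Qed.
Lemma eI_idem : kGmul eI eI = eI.
Proof. by rewrite {1}/eI -pi2_kGr kGmul_dl ltr1 pi2_id // eI_in. Qed.
Lemma h1_in : h1 \in I.
Proof.
apply: memv_span; apply/mapP; exists (1%g, 1%g, true); rewrite ?mem_enum //=.
by rewrite rtr1 ltr1.
Qed.
Lemma h2_in : h2 \in I.
Proof.
apply: memv_span; apply/mapP; exists (1%g, 1%g, false); rewrite ?mem_enum //=.
by rewrite rtr1 ltr1.
Qed.
Lemma kGmul_eI x : x \in I -> kGmul x eI = x.
Proof. by move=> xI; rewrite /eI -pi2_kGl kGmul_dr rtr1 pi2_id. Qed.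


End KG.

Section H.
Variables (k : fieldType) (gT : finGroupType) (chi : gT -> k) (g : gT) (n : nat)
  (alpha : k) (m : nat).
Hypothesis mn : (m < n)%N.
Local Notation V := {ffun gT -> k^o}.
Local Notation W := {ffun 'I_n * gT -> k}.
Local Notation zp := (@zpow_kG k gT n m).

Lemma n_gt0 : (0 < n)%N. Proof. exact: leq_ltn_trans mn. Qed.

Lemma sumW (J : Type) (r : seq J) (F : J -> W) c :
  @fun_of_fin _ (fun _ => GRing.Field.sort k) (Phant _) (\sum_(i <- r) F i) c = \sum_(i <- r) F i c.
Proof. by elim: r => [|i r IH]; rewrite ?big_nil ?ffunE // !big_cons ffunE IH. Qed.

Lemma HmulE (x y : W) : Hmul chi g alpha x y =
  \sum_(a : 'I_n * gT) \sum_(b : 'I_n * gT) fscale (x a * y b) (Hbmul chi g alpha a b).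
Proof. by []. Qed.

Lemma HmulE' (x y : W) c : Hmul chi g alpha x y c =
  \sum_(a : 'I_n * gT) \sum_(b : 'I_n * gT) x a * y b * Hbmul chi g alpha a b c.
Proof.
rewrite HmulE; etransitivity; first apply: sumW.
apply: eq_bigr => a _; etransitivity; first apply: sumW.
by apply: eq_bigr => b _; rewrite ffunE.
Qed.

Lemma Hbmul_0l u (i : 'I_n) t c : Hbmul chi g alpha (Ordinal n_gt0, u) (i, t) c =
  (chi u)^-1 ^+ i * (((c.1 : nat) == i) && (c.2 == u * t)%g)%:R.
Proof. by rewrite /Hbmul /= add0n ltn_ord !ffunE. Qed.

Lemma Hbmul_0r v (i : 'I_n) s c : Hbmul chi g alpha (i, s) (Ordinal n_gt0, v) c =
  (((c.1 : nat) == i) && (c.2 == s * v)%g)%:R.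
Proof. rewrite /Hbmul /= addn0 ltn_ord !ffunE expr0; exact: mul1r. Qed.

Lemma tR : (true%:R : k) = 1. Proof. by []. Qed.
Lemma fR : (false%:R : k) = 0. Proof. by []. Qed.

Lemma zpE (a : V) c : zp a c = if (c.1 : nat) == m then a c.2 else 0.
Proof. by rewrite ffunE. Qed.

Lemma HbE i (s : gT) c : Hbasis k n i s c = (((c.1 : nat) == i) && (c.2 == s))%:R.
Proof. by rewrite ffunE. Qed.

Lemma Hmul_left u (a : V) :
  Hmul chi g alpha (Hbasis k n 0 u) (zp a) = fscale ((chi u)^-1 ^+ m) (zp (ltr u a)).
Proof.
apply/ffunP=> c; rewrite HmulE'.
rewrite (bigD1 (Ordinal n_gt0, u)) //= [X in _ + X]big1 ?addr0 => [|[i s] /= ne]; last first.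
  rewrite big1 // => b _; rewrite HbE /=.
  case: (eqVneq s u) => [su|_]; last by rewrite andbF fR !mul0r.
  have /negbTE -> : (i : nat) != 0%N.
    by apply: contra ne => /eqP i0; apply/eqP; rewrite su; congr (_, _); apply: val_inj.
  by rewrite fR !mul0r.
rewrite HbE /= !eqxx tR ffunE zpE ffunE.
under eq_bigr => b _ do rewrite mul1r.
case: (eqVneq (c.1 : nat) m) => cm.
  rewrite (bigD1 (Ordinal mn, (u^-1 * c.2)%g)) //= [X in _ + X]big1 ?addr0 => [|[i t] /= ne]; last first.
    rewrite zpE Hbmul_0l /=.
    case: eqP => [im|]; last by rewrite mul0r.
    case: (eqVneq c.2 (u * t)%g) => [ct|_]; last by rewrite andbF fR !mulr0.
    case/negP: ne; apply/eqP; rewrite ct mulKg; congr (_, _); exact: val_inj.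
  rewrite zpE Hbmul_0l /= eqxx cm !eqxx mulKVg eqxx /= tR.
  by rewrite mulr1 mulrC.
rewrite big1 ?mulr0 // => [[i t]] _; rewrite zpE Hbmul_0l /=.
case: eqP => [im|]; last by rewrite mul0r.
by rewrite im (negbTE cm) /= fR !mulr0.
Qed.

Lemma Hmul_right v (a : V) :
  Hmul chi g alpha (zp a) (Hbasis k n 0 v) = zp (rtr v a).
Proof.
apply/ffunP=> c; rewrite HmulE'.
have E : forall x : 'I_n * gT, \sum_b zp a x * Hbasis k n 0 v b * Hbmul chi g alpha x b c
    = zp a x * Hbmul chi g alpha x (Ordinal n_gt0, v) c.
  move=> x; rewrite (bigD1 (Ordinal n_gt0, v)) //= [X in _ + X]big1 ?addr0 => [|[i s] /= ne].
    by rewrite HbE /= !eqxx tR mulr1.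
  rewrite HbE /=.
  case: (eqVneq s v) => [sv|_]; last by rewrite andbF fR mulr0 mul0r.
  have /negbTE -> : (i : nat) != 0%N.
    by apply: contra ne => /eqP i0; apply/eqP; rewrite sv; congr (_, _); apply: val_inj.
  by rewrite fR mulr0 mul0r.
rewrite (eq_bigr _ (fun x _ => E x)) zpE ffunE.
case: (eqVneq (c.1 : nat) m) => cm.
  rewrite (bigD1 (Ordinal mn, (c.2 * v^-1)%g)) //= big1 ?addr0 => [|[i t] /= ne].
    by rewrite zpE Hbmul_0r /= eqxx cm eqxx mulgKV eqxx tR mulr1.
  rewrite zpE Hbmul_0r /=.
  case: eqP => [im|]; last by rewrite mul0r.
  case: (eqVneq c.2 (t * v)%g) => [ct|_]; last by rewrite andbF fR !mulr0.
  case/negP: ne; apply/eqP; rewrite ct mulgK; congr (_, _); exact: val_inj.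
rewrite big1 // => [[i t]] _; rewrite zpE Hbmul_0r /=.
case: eqP => [im|]; last by rewrite mul0r.
by rewrite im (negbTE cm) /= fR !mulr0.
Qed.


Lemma zpD a b : zp (a + b) = zp a + zp b.
Proof. by apply/ffunP=> c; rewrite !ffunE; case: ifP; rewrite ?addr0. Qed.
Lemma zpZ c (a : V) : zp (c *: a) = fscale c (zp a).
Proof. by apply/ffunP=> x; rewrite !ffunE; case: ifP; rewrite ?mulr0 ?ffunE. Qed.
Lemma zp0 : zp 0 = 0.
Proof. by apply/ffunP=> x; rewrite !ffunE; case: ifP. Qed.
Lemma fscaleK c d (x : W) : fscale c (fscale d x) = fscale (c * d) x.
Proof. by apply/ffunP=> y; rewrite !ffunE mulrA. Qed.
Lemma fscale1 (x : W) : fscale 1 x = x.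
Proof. by apply/ffunP=> y; rewrite !ffunE mul1r. Qed.

Variable P : W -> Prop.
Hypothesis hP : is_ideal chi g alpha P.
Hypothesis chi_nz : forall s, chi s != 0.

Lemma Q_ltr u (a : V) : P (zp a) -> P (zp (ltr u a)).
Proof.
case: hP => _ _ hZ hM Pa.
have := (hM (Hbasis k n 0 u) (zp a) Pa).1; rewrite Hmul_left => /(hZ (chi u ^+ m)).
by rewrite fscaleK -exprMn mulfV // expr1n fscale1.
Qed.
Lemma Q_rtr v (a : V) : P (zp a) -> P (zp (rtr v a)).
Proof.
case: hP => _ _ hZ hM Pa.
by have := (hM (Hbasis k n 0 v) (zp a) Pa).2; rewrite Hmul_right.
Qed.

Lemma Q_kGl (a b : V) : P (zp b) -> P (zp (kGmul a b)).
Proof.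
case: hP => P0 PD hZ hM Pb.
rewrite kGmul_suml; apply: (big_ind (fun x => P (zp x))).
- by rewrite zp0.
- by move=> x y Px Py; rewrite zpD; apply: PD.
by move=> u _; rewrite zpZ; apply: hZ; apply: Q_ltr.
Qed.

Lemma Q_eI (h1 h2 : V) : P (zp h1) -> P (zp h2) -> P (zp (eI h1 h2)).
Proof.
case: hP => P0 PD hZ hM P1 P2.
apply: (@span_ind _ _ (fun x => P (zp x)) (gens h1 h2)); last exact: pi2_in.
- by rewrite zp0.
- by move=> x y Px Py; rewrite zpD; apply: PD.
- by move=> c x Px; rewrite zpZ; apply: hZ.
move=> x /mapP [[[s t] b]] _ ->; apply: Q_ltr; apply: Q_rtr; by case: b.
Qed.

End H.

Lemma ideal_gen_mono (k : fieldType) (gT : finGroupType) (n : nat) (chi : gT -> k) g alpha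
   (S1 S2 : seq {ffun 'I_n * gT -> k}) x :
  (forall s, s \in S2 -> ideal_gen chi g alpha S1 s) ->
  ideal_gen chi g alpha S2 x -> ideal_gen chi g alpha S1 x.
Proof. by move=> H12 H2 P hP hS1; apply: H2 => // s /H12; apply. Qed.

Theorem lemma3p2 (k : closedFieldType) (gT : finGroupType) (chi : gT -> k)
  (g : gT) (n : nat) (alpha : k) :
  [pchar k] =i pred0 ->
  (forall s t : gT, chi (s * t)%g = chi s * chi t) ->
  (forall s : gT, chi s != 0) ->
  (forall s : gT, (g * s = s * g)%g) ->
  n.-primitive_root (chi g) -> (2 <= n)%N ->
  (fscale alpha (gdelta k (g ^+ n)%g - gdelta k 1%g) = 0 \/ (forall s, chi s ^+ n = 1)) ->
  forall (h1 h2 : {ffun gT -> k}) (m : nat), (m < n)%N ->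
  exists h : {ffun gT -> k},
    [/\ (forall x : {ffun gT -> k}, kGmul h x = kGmul x h),
        kGmul h h = h &
        forall x : {ffun 'I_n * gT -> k},
          ideal_gen chi g alpha [:: zpow_kG n m h1; zpow_kG n m h2] x <->
          ideal_gen chi g alpha [:: zpow_kG n m h] x].
Proof.
move=> hchar _ chi_nz _ _ _ _ h1 h2 m mn.
have hN : (#|gT|%:R : k) != 0.
  rewrite ((pcharf0P k).1 hchar) -lt0n; apply/card_gt0P; by exists 1%g.
exists (eI h1 h2); split.
- by move=> x; apply: eI_central.
- exact: eI_idem.
move=> x; split; apply: ideal_gen_mono => s; rewrite !inE.
  move=> /orP [] /eqP -> P hP hS; have Pe : P (zpow_kG n m (eI h1 h2)) by apply: hS; rewrite inE.
    by rewrite -(kGmul_eI hN (h1_in h1 h2)); apply: (Q_kGl mn hP chi_nz).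
  by rewrite -(kGmul_eI hN (h2_in h1 h2)); apply: (Q_kGl mn hP chi_nz).
move=> /eqP -> P hP hS; apply: (Q_eI mn hP chi_nz).
  by apply: hS; rewrite !inE eqxx.
by apply: hS; rewrite !inE eqxx orbT.
Qed.
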